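(* Let $\mathcal G=(V,E)$ be a constraint graph over $(\mathbb F,S)$ and let $W$ be a weight on $\mathcal G$ with finite support (i.e. only finitely many vertices and edges have nonzero weight; e.g. $\mathcal G$ finite). If $W(v_1)>0$ for some $v_1\in V$, then there exists a periodic treequence $x\in X_{\mathcal G}$ with $x(\mathrm{id})=v_1$.
   Context: $\mathbb F$ is a finitely generated free group with symmetric free generating set $S=B\cup B^{-1}$, $B$ a free basis. A constraint graph is $\mathcal G=(V,E)$ with $E\subset V\times V\times S$, $(v,w;s)$ denoting the directed edge from $v$ to $w$ labeled $s$. The graph subshift $X_{\mathcal G}\subset V^{\mathbb F}$ is the set of $x:\mathbb F\to V$ with $(x(f),x(fs);s)\in E$ for all $f,s$; shifts act by $(\sigma_gx)(f)=x(g^{-1}f)$, and $x$ is periodic if $\{f:\sigma_fx=x\}$ has finite index in $\mathbb F$. A weight on $\mathcal G$ is $W:V\cup E\to[0,\infty)$ (with $W(v,w;s)=0$ for $(v,w;s)\notin E$) such that for all $v\in V,s\in S$: $W(v)=\sum_{w}W(v,w;s)=\sum_wW(w,v;s)$, and $W(v,w;s)=W(w,v;s^{-1})$ for all $v,w,s$. *)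

(* Defs.v *)
From Stdlib Require Import Reals.
From mathcomp Require Import all_boot.
From Stdlib Require List.

Set Implicit Arguments.
Unset Strict Implicit.
Unset Printing Implicit Defensive.

Section FreeGroup.
Variable B : finType.

(* The symmetric generating set S = B ∪ B^{-1}: (b,false) = b, (b,true) = b^{-1}. *)
Definition letter : Type := (B * bool)%type.
Definition linv (s : letter) : letter := (s.1, ~~ s.2).

Fixpoint reducedb (w : seq letter) : bool :=
  match w with
  | s :: ((t :: _) as w') => (t != linv s) && reducedb w'
  | _ => true
  end.

Definition cons_red (s : letter) (w : seq letter) : seq letter :=
  match w with
  | t :: w' => if t == linv s then w' else s :: t :: w'
  | [::] => [:: s]
  end.
Definition red (w : seq letter) : seq letter := foldr cons_red [::] w.

Lemma reducedb_tail s w : reducedb (s :: w) -> reducedb w.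
Proof. by case: w => [|t w] //= /andP[]. Qed.

Lemma cons_red_reduced s w : reducedb w -> reducedb (cons_red s w).
Proof.
case: w => [|t w] //= Hw.
case: ifP => [_|Hne]; first exact: reducedb_tail Hw.
by rewrite /= Hne.
Qed.

Lemma red_reduced w : reducedb (red w).
Proof. by elim: w => [|s w IH] //=; apply: cons_red_reduced. Qed.

Definition FG : Type := {w : seq letter | reducedb w}.

Definition FG1 : FG := exist _ [::] isT.
Definition FGmul (u v : FG) : FG :=
  exist _ (red (proj1_sig u ++ proj1_sig v)) (red_reduced _).
Definition FGinv (u : FG) : FG :=
  exist _ (red (rev (map linv (proj1_sig u)))) (red_reduced _).
Definition FGgen (s : letter) : FG := exist _ [:: s] isT.

End FreeGroup.

Section Subshift.
Variable B : finType.
Variable V : Type.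

Definition graph_subshift (E : V -> V -> letter B -> Prop) (x : FG B -> V) : Prop :=
  forall (f : FG B) (s : letter B), E (x f) (x (FGmul f (FGgen s))) s.

Definition shift (g : FG B) (x : FG B -> V) : FG B -> V :=
  fun f => x (FGmul (FGinv g) f).

(* x is periodic: its stabilizer {f | σ_f x = x} has finite index in F,
   i.e. finitely many left cosets r·Stab cover F. *)
Definition periodic (x : FG B -> V) : Prop :=
  exists reps : seq (FG B),
    forall f : FG B, exists2 r, List.In r reps &
      (forall h, shift (FGmul (FGinv r) f) x h = x h).

Definition sumR (L : list V) (g : V -> R) : R :=
  foldr (fun v acc => Rplus (g v) acc) R0 L.

(* W is a weight on G with finite support: W : V ∪ E -> [0,∞), zero off E,
   supported on a finite duplicate-free list L of vertices (all vertices and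
   endpoints of edges of nonzero weight lie in L), satisfying the
   conservation laws (sums over w ∈ V, which reduce to sums over L) and the
   symmetry W(v,w;s) = W(w,v;s^{-1}). *)
Definition finite_weight (E : V -> V -> letter B -> Prop)
    (Wv : V -> R) (We : V -> V -> letter B -> R) : Prop :=
  (forall v, Rle R0 (Wv v)) /\
  (forall v w s, Rle R0 (We v w s)) /\
  (forall v w s, ~ E v w s -> We v w s = R0) /\
  (forall v w s, We v w s = We w v (linv s)) /\
  exists L : list V,
    List.NoDup L /\
    (forall v, Wv v <> R0 -> List.In v L) /\
    (forall v w s, We v w s <> R0 -> List.In v L /\ List.In w L) /\
    (forall v s, Wv v = sumR L (fun w => We v w s)) /\
    (forall v s, Wv v = sumR L (fun w => We w v s)).

End Subshift.

(* Main.v *)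
Require Import Defs.
From Stdlib Require Import Reals Lra Lia ZArith Classical.
From mathcomp Require Import all_boot.
Set Implicit Arguments.
Unset Strict Implicit.
Set Warnings "-notation-overridden".


Section Forms.
Local Open Scope R_scope.
Variable I : eqType.
Definition form := seq (Z * I).
Definition evalF (f : form) (x : I -> R) : R :=
  foldr (fun p acc => (IZR p.1 * x p.2 + acc)) 0 f.
Definition evalZ (f : form) (x : I -> Z) : Z :=
  foldr (fun p acc => (p.1 * x p.2 + acc)%Z) 0%Z f.
Definition coefF (f : form) (j : I) : Z :=
  foldr (fun p acc => ((if p.2 == j then p.1 else 0) + acc)%Z) 0%Z f.
Definition scaleF (a : Z) (f : form) : form := map (fun p => (a * p.1, p.2)%Z) f.
Definition absF (f : form) : R := foldr (fun p acc => (Rabs (IZR p.1) + acc)) 0 f.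

Lemma evalZ_R f z : IZR (evalZ f z) = evalF f (fun l => IZR (z l)).
Proof. elim: f => [|[a l] f IH] //=. by rewrite plus_IZR mult_IZR IH. Qed.

Lemma evalF_cat f g x : evalF (f ++ g) x = (evalF f x + evalF g x).
Proof. elim: f => [|[a l] f IH] /=; [ring| rewrite IH; ring]. Qed.

Lemma evalF_scale a f x : evalF (scaleF a f) x = (IZR a * evalF f x).
Proof. elim: f => [|[b l] f IH] /=; [ring| rewrite IH mult_IZR; ring]. Qed.

Lemma coefF_scale a f j : coefF (scaleF a f) j = (a * coefF f j)%Z.
Proof. elim: f => [|[b l] f IH] /=; first lia. rewrite IH; case: (l == j); lia. Qed.

Lemma evalF_ext f x y : (forall l, x l = y l) -> evalF f x = evalF f y.
Proof. move=> H; elim: f => [|[b l] f IH] //=. by rewrite IH H. Qed.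

Lemma evalF_lin f a c j y y' :
  (forall l, y' l = (IZR a * y l - (if l == j then c else 0))) ->
  evalF f y' = (IZR a * evalF f y - IZR (coefF f j) * c).
Proof.
move=> H; elim: f => [|[b l] f IH] /=; first ring.
rewrite IH H plus_IZR; case: (l == j) => /=; ring.
Qed.

Lemma evalF_mulc f (c : R) x : evalF f (fun l => c * x l) = (c * evalF f x).
Proof. elim: f => [|[b l] f IH] /=; [ring| rewrite IH; ring]. Qed.

Definition sumL (A : Type) (u : seq A) (g : A -> R) : R :=
  foldr (fun a acc => (g a + acc)) 0 u.

Lemma sum_delta (u : seq I) (l : I) (c : R) : uniq u ->
  sumL u (fun j => if l == j then c else 0) = if l \in u then c else 0.
Proof.
elim: u => [|k u IH] //= /andP[ku uu]; rewrite IH // in_cons.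
case: eqP => [->|_] /=; last ring.
by rewrite (negbTE ku); ring.
Qed.

Lemma sumL_add (A : Type) (u : seq A) g h :
  sumL u (fun j => g j + h j) = (sumL u g + sumL u h).
Proof. elim: u => [|k u IH] /=; [ring| rewrite IH; ring]. Qed.

Lemma sumL_ext (A : Type) (u : seq A) g h : (forall j, g j = h j) -> sumL u g = sumL u h.
Proof. move=> H; elim: u => [|k u IH] //=; by rewrite IH H. Qed.

Lemma coefF_notin f l : l \notin map snd f -> coefF f l = 0%Z.
Proof.
elim: f => [|[b k] f IH] //=; rewrite in_cons negb_or => /andP[H1 H2].
rewrite IH // eq_sym (negbTE H1); lia.
Qed.

Lemma evalF_coef f x :
  evalF f x = sumL (undup (map snd f)) (fun j => IZR (coefF f j) * x j).
Proof.
elim: f => [|[a l] f IH] //=.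
have U := undup_uniq (map snd f).
rewrite (sumL_ext _ (h := fun j => (if l == j then IZR a * x l else 0)
       + IZR (coefF f j) * x j)); last first.
  move=> j; rewrite plus_IZR; case: eqP => [->|_]; ring.
case: ifP => Hl.
  rewrite sumL_add sum_delta // mem_undup Hl IH; ring.
rewrite /= sumL_add sum_delta // mem_undup Hl IH eqxx coefF_notin ?Hl //; ring.
Qed.

Lemma evalF_zero f x : (forall j, coefF f j = 0%Z) -> evalF f x = 0.
Proof.
move=> H; rewrite evalF_coef.
elim: (undup _) => [|k u IH] //=; rewrite IH H; ring.
Qed.

Lemma absF_bound f d : (forall l, 0 <= d l <= 1) -> (- absF f <= evalF f d).
Proof.
move=> H; elim: f => [|[b l] f IH] /=; first lra.
have [H1 H2] := H l.
have : (- Rabs (IZR b) <= IZR b * d l).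
  case: (Rle_or_lt 0 (IZR b)) => Hb.
    rewrite Rabs_right; [nra|lra].
  rewrite Rabs_left //; nra.
lra.
Qed.

Lemma base_case (ineqs : seq form) (x : I -> R) :
  (forall g, List.In g ineqs -> (0 < evalF g x)) ->
  exists z : I -> Z, forall g, List.In g ineqs -> (0 < evalF g (fun l => IZR (z l))).
Proof.
move=> H.
have [N HN] : exists N : nat, forall g, List.In g ineqs -> (absF g < INR N * evalF g x).
  elim: ineqs H => [|g gs IH] H; first by exists 0%N.
  have [N0 HN0] := IH (fun g' h => H g' (or_intror h)).
  have Hg := H g (or_introl erefl).
  have [N1 HN1] : exists N1 : nat, (absF g / evalF g x < INR N1).
    have [Ha _] := archimed (absF g / evalF g x).
    exists (Z.to_nat (up (absF g / evalF g x))).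
    rewrite INR_IZR_INZ Z2Nat.id //.
    have : (0 <= absF g).
      elim: (g) => [|[b l] f IHf] /=; [lra| have := Rabs_pos (IZR b); lra].
    move=> Ha0.
    have : (0 <= absF g / evalF g x) by apply: Rle_mult_inv_pos; lra.
    move=> h; apply: le_IZR; lra.
  exists (N0 + N1)%N => g' [<-|Hin].
    rewrite plus_INR.
    have h := Rmult_lt_compat_r _ _ _ Hg HN1.
    rewrite /Rdiv Rmult_assoc Rinv_l in h; last lra.
    rewrite Rmult_1_r in h.
    have := pos_INR N0; nra.
  have := HN0 g' Hin; have := H g' (or_intror Hin); rewrite plus_INR.
  have := pos_INR N1; nra.
exists (fun l => up (INR N * x l)) => g Hg.
have := HN g Hg.
set d := fun l => (IZR (up (INR N * x l)) - INR N * x l).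
have Hd : forall l, (0 <= d l <= 1).
  move=> l; rewrite /d; have [h1 h2] := archimed (INR N * x l); lra.
have := absF_bound g Hd.
have -> : evalF g (fun l => IZR (up (INR N * x l))) = (evalF g d + INR N * evalF g x).
  rewrite -evalF_mulc; elim: (g) => [|[b l] f IHf] /=; [ring| rewrite IHf /d; ring].
lra.
Qed.

Theorem intsol (eqs ineqs : seq form) (x : I -> R) :
  (forall e, List.In e eqs -> evalF e x = 0) ->
  (forall g, List.In g ineqs -> (0 < evalF g x)) ->
  exists z : I -> Z,
    (forall e, List.In e eqs -> evalF e (fun l => IZR (z l)) = 0) /\
    (forall g, List.In g ineqs -> (0 < evalF g (fun l => IZR (z l)))).
Proof.
move: {2}(size eqs) (erefl (size eqs)) => n.
elim: n eqs ineqs => [|n IH] [|e eqs] ineqs //= Hs He Hg.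
  have [z Hz] := base_case Hg; by exists z.
case: Hs => Hs.
have He0 := He e (or_introl erefl).
have He' : forall e', List.In e' eqs -> evalF e' x = 0 by move=> e' h; apply: He; right.
case: (classic (exists j, coefF e j <> 0%Z)) => [[j Hj]|Hno]; last first.
  have [z [Hz1 Hz2]] := IH eqs ineqs Hs He' Hg.
  exists z; split => // e1 [<-|h]; last exact: Hz1.
  apply: evalF_zero => j; apply: NNPP => h; apply: Hno; by exists j.
pose e' := if (0 <? coefF e j)%Z then e else scaleF (-1) e.
pose a := coefF e' j.
have Ha : (0 < a)%Z.
  rewrite /a /e'; case: Z.ltb_spec => h //; rewrite coefF_scale; lia.
have He'e : forall y, evalF e' y = 0 <-> evalF e y = 0.
  move=> y; rewrite /e'; case: ifP => _ //; rewrite evalF_scale; split; lra.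
pose T f := scaleF a f ++ scaleF (- coefF f j) e'.
have ET : forall f y, evalF (T f) y = (IZR a * evalF f y - IZR (coefF f j) * evalF e' y).
  move=> f y; rewrite evalF_cat !evalF_scale opp_IZR; ring.
have Hx' : evalF e' x = 0 by apply/He'e.
have H1 : size (map T eqs) = n by rewrite size_map.
have H2 : forall g, List.In g (map T eqs) -> evalF g x = 0.
  move=> g /List.in_map_iff [f [<- Hf]]; rewrite ET Hx' (He' f Hf); ring.
have H3 : forall g, List.In g (map T ineqs) -> 0 < evalF g x.
  move=> g /List.in_map_iff [f [<- Hf]]; rewrite ET Hx'.
  have := IZR_lt _ _ Ha; have := Hg f Hf; nra.
have [z' [Hz1 Hz2]] := IH _ _ H1 H2 H3.
pose EZ := evalZ e' z'.
exists (fun l => (a * z' l - (if l == j then EZ else 0))%Z).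
have key : forall f, evalF f (fun l => IZR ((a * z' l - (if l == j then EZ else 0))%Z))
   = evalF (T f) (fun l => IZR (z' l)).
  move=> f; rewrite ET -[evalF e' _]evalZ_R -/EZ.
  apply: evalF_lin => l.
  rewrite minus_IZR mult_IZR; by case: (l == j).
split.
  move=> e1 [<-|Hin]; last by rewrite key; apply: Hz1; apply: List.in_map.
  apply/He'e; rewrite key ET -/a; ring.
by move=> g Hin; rewrite key; apply: Hz2; apply: List.in_map.
Qed.
End Forms.


Fixpoint psum (g : nat -> nat) (j : nat) : nat :=
  match j with 0 => 0 | S j => psum g j + g j end.
Definition fnd (g : nat -> nat) (m k : nat) : nat :=
  find (fun j => k < psum g j.+1) (iota 0 m).
Definition Pm (m : nat) (M M' : nat -> nat -> nat) (w : nat * nat) : nat * nat :=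
  let j := fnd (M w.1) m w.2 in (j, psum (M' j) w.1 + (w.2 - psum (M w.1) j)).

Lemma psum_mono g j1 j2 : j1 <= j2 -> psum g j1 <= psum g j2.
Proof.
move=> /subnKC <-; elim: (j2 - j1) => [|d IH]; first by rewrite addn0.
by rewrite addnS /=; apply: leq_trans IH (leq_addr _ _).
Qed.

Lemma psum_ext g h j : (forall j', j' < j -> g j' = h j') -> psum g j = psum h j.
Proof.
elim: j => [|j IH] H //=; rewrite IH ?H // => j' lt; apply: H; exact: ltnW.
Qed.

Lemma fnd_spec g m k j : j < m -> psum g j <= k < psum g j.+1 -> fnd g m k = j.
Proof.
move=> jm /andP[h1 h2]; rewrite /fnd.
set q := (fun j => k < psum g j.+1).
have hq : has q (iota 0 m) by apply/hasP; exists j; rewrite ?mem_iota //.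
have fs : find q (iota 0 m) < m.
  by move: hq; rewrite has_find size_iota.
have := nth_find 0 hq; rewrite nth_iota // add0n => hf.
case: (ltngtP (find q (iota 0 m)) j) => // c.
  have h := psum_mono g c; have := leq_ltn_trans h1 hf.
  move=> h3; have := leq_trans h3 h.
  by rewrite ltnn.
have := before_find 0 c; rewrite nth_iota // add0n /q h2 //.
Qed.

Lemma fnd_ex g m k : k < psum g m -> exists j, j < m /\ psum g j <= k < psum g j.+1.
Proof.
elim: m => [|m IH] //= h.
case: (ltnP k (psum g m)) => h'.
  have [j [j1 j2]] := IH h'; exists j; split => //; exact: ltnW.
by exists m; rewrite ltnSn h' h.
Qed.

Lemma Pm_spec m M M' i k :
  (forall i j, i < m -> j < m -> M' j i = M i j) -> i < m -> k < psum (M i) m ->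
  (Pm m M M' (i, k)).1 < m /\ (Pm m M M' (i, k)).2 < psum (M' (Pm m M M' (i,k)).1) m /\
  0 < M i (Pm m M M' (i, k)).1 /\ Pm m M' M (Pm m M M' (i, k)) = (i, k).
Proof.
move=> HT im km.
have [j [jm /andP[h1 h2]]] := fnd_ex km.
have Fj : fnd (M i) m k = j by apply: fnd_spec => //; rewrite h1 h2.
rewrite /Pm /= Fj /=.
have He : k - psum (M i) j < M i j by rewrite ltn_subLR.
have Hk' : psum (M' j) i + (k - psum (M i) j) < psum (M' j) i.+1.
  by rewrite /= ltn_add2l HT.
split => //; split.
  apply: leq_trans Hk' _; exact: psum_mono.
split; first by apply: leq_ltn_trans He.
have Fi : fnd (M' j) m (psum (M' j) i + (k - psum (M i) j)) = i.
  by apply: fnd_spec => //; rewrite leq_addr Hk'.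
by rewrite Fi addKn subnKC.
Qed.


Lemma linvK (B : finType) (s : letter B) : linv (linv s) = s.
Proof. by case: s => b c; rewrite /linv /= negbK. Qed.

Section Act.
Variable B : finType.
Variable T : Type.
Variable D : T -> Prop.
Variable pi : letter B -> T -> T.
Hypothesis Dpi : forall s w, D w -> D (pi s w).
Hypothesis canc : forall s w, D w -> pi (linv s) (pi s w) = w.

Definition act (w : T) (u : seq (letter B)) : T := foldl (fun w s => pi s w) w u.

Lemma act_D w u : D w -> D (act w u).
Proof. elim: u w => [|s u IH] w Hw //=; apply: IH; exact: Dpi. Qed.

Lemma act_cat w u v : act w (u ++ v) = act (act w u) v.
Proof. by rewrite /act foldl_cat. Qed.

Lemma act_red w u : D w -> act w (red u) = act w u.
Proof.
elim: u w => [|s u IH] w Hw //=.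
rewrite -IH; last exact: Dpi.
case E: (red u) => [|t u'] //=.
case: eqP => [->|_] //=.
by rewrite canc.
Qed.

Lemma act_inv w u : D w -> act (act w u) (rev (map (@linv B) u)) = w.
Proof.
elim: u w => [|s u IH] w Hw //=.
rewrite rev_cons -cats1 act_cat IH; last exact: Dpi.
by rewrite /= canc.
Qed.

Lemma act_inv' w u : D w -> act (act w (rev (map (@linv B) u))) u = w.
Proof.
move=> Hw; have := act_inv (rev (map (@linv B) u)) Hw.
by rewrite map_rev revK -map_comp (eq_map (@linvK B)) map_id.
Qed.

Definition A (w : T) (u : FG B) : T := act w (proj1_sig u).

Lemma A_D w u : D w -> D (A w u).
Proof. exact: act_D. Qed.

Lemma A_mul w u v : D w -> A w (FGmul u v) = A (A w u) v.
Proof. by move=> Hw; rewrite /A /FGmul /= act_red // act_cat. Qed.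

Lemma A_inv1 w u : D w -> A (A w u) (FGinv u) = w.
Proof.
move=> Hw; rewrite /A /FGinv /= act_red ?act_inv //; exact: act_D.
Qed.

Lemma A_inv2 w u : D w -> A (A w (FGinv u)) u = w.
Proof. move=> Hw; rewrite /A /FGinv /= act_red ?act_inv' //. Qed.

Lemma A_gen w f s : D w -> A w (FGmul f (FGgen s)) = pi s (A w f).
Proof. by move=> Hw; rewrite A_mul. Qed.

End Act.

Section P4.

Lemma In_mem (T : eqType) (x : T) s : x \in s -> List.In x s.
Proof. elim: s => [|y s IH] //=; rewrite in_cons => /orP[/eqP ->|h]; [by left|right; exact: IH]. Qed.

Lemma mem_In (T : eqType) (x : T) s : List.In x s -> x \in s.
Proof. elim: s => [|y s IH] //= [->|h]; rewrite in_cons ?eqxx // IH ?orbT //. Qed.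

Lemma In_iota j n : j < n -> List.In j (iota 0 n).
Proof. by move=> h; apply: In_mem; rewrite mem_iota. Qed.

Lemma nth_In (V : Type) (v : V) (L : seq V) :
  List.In v L -> exists2 i, i < size L & nth v L i = v.
Proof.
elim: L => [|y L IH] //= [->|h]; first by exists 0.
have [i hi hn] := IH h; by exists i.+1.
Qed.

Lemma reps_ex (B : finType) (T : Type) (l : seq T) (P : T -> FG B -> Prop) :
  exists reps : seq (FG B), forall w, List.In w l -> (exists r, P w r) ->
    exists2 r, List.In r reps & P w r.
Proof.
elim: l => [|w l [reps IH]]; first by exists [::].
case: (classic (exists r, P w r)) => [[r0 H0]|Hn].
  exists (r0 :: reps) => w' [<-|h] hex; first by exists r0; [left|].
  have [r hr hp] := IH w' h hex; by exists r; [right|].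
exists reps => w' [<-|h] hex; first by exfalso.
exact: IH.
Qed.

Local Open Scope R_scope.

Lemma sumL_map (A C : Type) (h : A -> C) s g : sumL (map h s) g = sumL s (fun a => g (h a)).
Proof. by elim: s => [|a s IH] //=; rewrite IH. Qed.

Lemma sumR_iota (V : Type) (v : V) (L : seq V) g :
  sumR L g = sumL (iota 0 (size L)) (fun i => g (nth v L i)).
Proof.
rewrite -sumL_map; congr sumL.
by rewrite -{1}(mkseq_nth v L).
Qed.

Lemma sumL_ext_in (A : Type) (s : seq A) g h :
  (forall a, List.In a s -> g a = h a) -> sumL s g = sumL s h.
Proof.
elim: s => [|a s IH] H //=; rewrite H; last by left.
by rewrite IH // => b hb; apply: H; right.
Qed.

Lemma sumL_pre (g : nat -> nat) n : sumL (iota 0 n) (fun j => INR (g j)) = INR (psum g n).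
Proof.
elim: n => [|n IH]; first by [].
rewrite (_ : iota 0 n.+1 = iota 0 n ++ [:: n]); last by rewrite -addn1 iotaD.
rewrite /sumL foldr_cat /= -/(sumL _ _).
rewrite (_ : foldr _ _ _ = sumL (iota 0 n) (fun j => INR (g j)) + INR (g n)).
  by rewrite IH plus_INR.
elim: (iota 0 n) => [|a s IHs] /=; [ring| rewrite IHs; ring].
Qed.

Lemma evalF_negmap (I : eqType) (s : seq nat) (h : nat -> I) x :
  evalF (map (fun j => ((-1)%Z, h j)) s) x = - sumL s (fun j => x (h j)).
Proof. elim: s => [|a s IH] /=; [ring| rewrite IH; ring]. Qed.

Lemma Rsym_aux (a b : R) : IZR 1 * a + (IZR (-1) * b + 0) = 0 -> a = b.
Proof. move=> h; lra. Qed.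
Lemma Z2N_pos (x : Z) : (0 < Z.to_nat x)%coq_nat -> (0 < x)%Z.
Proof. lia. Qed.
Lemma Z2N_pos' (x : Z) : (0 < x)%Z -> (0 < Z.to_nat x)%coq_nat.
Proof. lia. Qed.

End P4.
Delimit Scope R_scope with Re.


Theorem lemma2p2 (B : finType) (V : Type) (E : V -> V -> letter B -> Prop)
    (Wv : V -> R) (We : V -> V -> letter B -> R) :
  finite_weight E Wv We ->
  forall v1 : V, Rlt R0 (Wv v1) ->
  exists x : FG B -> V,
    graph_subshift E x /\ periodic x /\ x (FG1 B) = v1.
Proof.
move=> [Hv [Hw [HE [Hsym [L [ND [HL1 [HL2 [Hrow Hcol]]]]]]]]] v1 Hv1.
pose m := size L.
pose vtx i := nth v1 L i.
have [i1 i1m Hi1] : exists2 i, i < m & vtx i = v1.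
  apply: nth_In; apply: HL1; apply: Rgt_not_eq; exact: Hv1.
pose Ls : seq (letter B) := enum (@predT (B * bool)%type).
have inLs : forall t, List.In t Ls by move=> t; apply: In_mem; rewrite mem_enum.
pose I := (nat + (nat * nat * letter B))%type.
pose X (l : I) : R := match l with inl i => Wv (vtx i) | inr (i, j, t) => We (vtx i) (vtx j) t end.
have X0 : forall l, (0 <= X l)%Re by case=> [i|[[i j] t]] /=.
pose rowF i t : form I := (1%Z, inl i) :: map (fun j => ((-1)%Z, inr (i, j, t))) (iota 0 m).
pose colF i t : form I := (1%Z, inl i) :: map (fun j => ((-1)%Z, inr (j, i, t))) (iota 0 m).
pose symF i j t : form I := [:: (1%Z, inr (i, j, t)); ((-1)%Z, inr (j, i, linv t))].
pose unitF (l : I) : form I := [:: (1%Z, l)].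
pose allv : seq I := map inl (iota 0 m) ++
  List.flat_map (fun i => List.flat_map (fun j => map (fun t => inr (i, j, t)) Ls) (iota 0 m)) (iota 0 m).
have allvP : forall l, match l with inl i => is_true (i < m) | inr (i, j, t) => (i < m) /\ (j < m) end ->
    List.In l allv.
  case=> [i|[[i j] t]] h.
    apply/List.in_or_app; left; apply: List.in_map; exact: In_iota.
  case: h => hi hj; apply/List.in_or_app; right.
  apply/List.in_flat_map; exists i; split; first exact: In_iota.
  apply/List.in_flat_map; exists j; split; first exact: In_iota.
  exact: List.in_map.
pose isZ (r : R) : bool := if Req_EM_T r 0 then true else false.
pose rows := List.flat_map (fun i => map (rowF i) Ls) (iota 0 m).
pose cols := List.flat_map (fun i => map (colF i) Ls) (iota 0 m).
pose syms := List.flat_map (fun i => List.flat_map (fun j => map (symF i j) Ls) (iota 0 m)) (iota 0 m).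
pose zeros := map unitF (filter (fun l => isZ (X l)) allv).
pose ineqs := map unitF (filter (fun l => ~~ isZ (X l)) allv).
pose eqs := rows ++ cols ++ syms ++ zeros.
have Hrow' : forall i t, evalF (rowF i t) X = 0%Re.
  move=> i t; rewrite /rowF /= evalF_negmap (Hrow _ t) (sumR_iota v1) /=; rewrite Rmult_1_l; exact: Rplus_opp_r.
have Hcol' : forall i t, evalF (colF i t) X = 0%Re.
  move=> i t; rewrite /colF /= evalF_negmap (Hcol _ t) (sumR_iota v1) /=; rewrite Rmult_1_l; exact: Rplus_opp_r.
have Hsym' : forall i j t, evalF (symF i j t) X = 0%Re.
  move=> i j t; rewrite /symF /= (Hsym _ _ t); ring.
have Heqs : forall e, List.In e eqs -> evalF e X = 0%Re.
  move=> e; rewrite /eqs => /List.in_app_iff [|/List.in_app_iff [|/List.in_app_iff []]].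
  - by move=> /List.in_flat_map [i [_ /List.in_map_iff [t [<- _]]]].
  - by move=> /List.in_flat_map [i [_ /List.in_map_iff [t [<- _]]]].
  - by move=> /List.in_flat_map [i [_ /List.in_flat_map [j [_ /List.in_map_iff [t [<- _]]]]]].
  - move=> /List.in_map_iff [l [<- /mem_In]]; rewrite mem_filter => /andP[h _].
    move: h; rewrite /isZ /=; case: Req_EM_T => // h0 _; rewrite h0; ring.
have Hineqs : forall g, List.In g ineqs -> (0 < evalF g X)%Re.
  move=> g /List.in_map_iff [l [<- /mem_In]]; rewrite mem_filter => /andP[h _].
  move: h; rewrite /isZ /=; case: Req_EM_T => // h _.
  have := X0 l; lra.
have [z [Hz1 Hz2]] := intsol Heqs Hineqs.
have Hunit : forall l, List.In l allv ->
    (X l = 0%Re -> IZR (z l) = 0%Re) /\ (X l <> 0%Re -> (0 < IZR (z l))%Re).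
  move=> l hl; split => h.
    have : List.In (unitF l) eqs.
      apply/List.in_app_iff; right; apply/List.in_app_iff; right; apply/List.in_app_iff; right.
      apply: List.in_map; apply: In_mem; rewrite mem_filter mem_In // andbT /isZ.
      by case: Req_EM_T.
    move/Hz1; rewrite /= => h'; lra.
  have : List.In (unitF l) ineqs.
    apply: List.in_map; apply: In_mem; rewrite mem_filter mem_In // andbT /isZ.
    by case: Req_EM_T.
  move/Hz2; rewrite /=; lra.
have Hnn : forall l, List.In l allv -> (0 <= z l)%Z.
  move=> l hl; apply: le_IZR; have [h1 h2] := Hunit l hl.
  case: (Req_EM_T (X l) 0) => h; [rewrite h1 //; lra | have := h2 h; lra].
have Hpos : forall l, List.In l allv -> (0 < z l)%Z -> X l <> 0%Re.
  move=> l hl hz h; have [h1 _] := Hunit l hl; have := h1 h.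
  have := IZR_lt _ _ hz; lra.
pose nn i := Z.to_nat (z (inl i)).
pose Nn t i j := Z.to_nat (z (inr (i, j, t))).
have INRnn : forall i, i < m -> INR (nn i) = IZR (z (inl i)).
  move=> i hi; rewrite INR_IZR_INZ Z2Nat.id //; apply: Hnn; exact: allvP.
have INRNn : forall t i j, i < m -> j < m -> INR (Nn t i j) = IZR (z (inr (i, j, t))).
  move=> t i j hi hj; rewrite INR_IZR_INZ Z2Nat.id //; apply: Hnn; exact: allvP.
have iotaI : forall j, List.In j (iota 0 m) -> j < m.
  by move=> j /mem_In; rewrite mem_iota.
have rowN : forall i t, i < m -> nn i = psum (Nn t i) m.
  move=> i t hi; apply: INR_eq; rewrite -sumL_pre INRnn //.
  have : List.In (rowF i t) eqs.
    apply/List.in_app_iff; left; apply/List.in_flat_map; exists i; split; first exact: In_iota.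
    exact: List.in_map.
  move/Hz1; rewrite /rowF /= evalF_negmap => h.
  rewrite (sumL_ext_in (h := fun j => IZR (z (inr (i, j, t))))); last first.
    by move=> j /iotaI hj; rewrite INRNn.
  rewrite Rmult_1_l in h; exact: (Rminus_diag_uniq _ _ h).
have colN : forall i t, i < m -> nn i = psum (fun j => Nn t j i) m.
  move=> i t hi; apply: INR_eq; rewrite -sumL_pre INRnn //.
  have : List.In (colF i t) eqs.
    apply/List.in_app_iff; right; apply/List.in_app_iff; left.
    apply/List.in_flat_map; exists i; split; first exact: In_iota.
    exact: List.in_map.
  move/Hz1; rewrite /colF /= evalF_negmap => h.
  rewrite (sumL_ext_in (h := fun j => IZR (z (inr (j, i, t))))); last first.
    by move=> j /iotaI hj; rewrite INRNn.
  rewrite Rmult_1_l in h; exact: (Rminus_diag_uniq _ _ h).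
have symN : forall t i j, i < m -> j < m -> Nn (linv t) j i = Nn t i j.
  move=> t i j hi hj.
  have : List.In (symF i j t) eqs.
    apply/List.in_app_iff; right; apply/List.in_app_iff; right; apply/List.in_app_iff; left.
    apply/List.in_flat_map; exists i; split; first exact: In_iota.
    apply/List.in_flat_map; exists j; split; first exact: In_iota.
    exact: List.in_map.
  move/Hz1; rewrite /symF /= => h.
  have : z (inr (i, j, t)) = z (inr (j, i, linv t)).
    apply: eq_IZR; exact: (Rsym_aux h).
  by rewrite /Nn => ->.
have edgeN : forall t i j, i < m -> j < m -> 0 < Nn t i j -> E (vtx i) (vtx j) t.
  move=> t i j hi hj /ltP hN.
  have hz : (0 < z (inr (i, j, t)))%Z by exact: Z2N_pos hN.
  have := Hpos _ (allvP (inr (i, j, t)) (conj hi hj)) hz => /= hX.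
  apply: NNPP => hE; apply: hX; exact: HE.
have pos1 : 0 < nn i1.
  have [_ h] := Hunit _ (allvP (inl i1) i1m).
  have : (0 < IZR (z (inl i1)))%Re by apply: h; rewrite /= Hi1; lra.
  move/lt_0_IZR => hz; apply/ltP; exact: Z2N_pos' hz.
pose pi (t : letter B) (w : nat * nat) := Pm m (Nn t) (Nn (linv t)) w.
pose D (w : nat * nat) : Prop := w.1 < m /\ w.2 < nn w.1.
have PS : forall t w, D w -> D (pi t w) /\ 0 < Nn t w.1 (pi t w).1 /\ pi (linv t) (pi t w) = w.
  move=> t [i k] [/= hi hk].
  have HT : forall i j, i < m -> j < m -> Nn (linv t) j i = Nn t i j.
    move=> i' j' h1 h2; exact: symN.
  have hk' : k < psum (Nn t i) m by rewrite -rowN.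
  have [a [b [c d]]] := Pm_spec HT hi hk'.
  split; first split => //.
    rewrite /pi (colN _ t a) (psum_ext (h := Nn (linv t) (Pm m (Nn t) (Nn (linv t)) (i, k)).1)) //.
    move=> j hj; by rewrite symN.
  split => //.
  by rewrite /pi linvK.
have Dpi : forall s w, D w -> D (pi s w) by move=> s w h; case: (PS s w h).
have canc : forall s w, D w -> pi (linv s) (pi s w) = w by move=> s w h; case: (PS s w h) => _ [].
pose w0 := (i1, 0).
have Dw0 : D w0 by split.
pose x (f : FG B) := vtx (A pi w0 f).1.
exists x; split; [|split].
- move=> f s; rewrite /x (A_gen Dpi canc) //.
  have Dw := A_D Dpi f Dw0.
  have [[h1 _] [h2 _]] := PS s _ Dw.
  apply: edgeN => //; by case: Dw.
- pose Ol := List.flat_map (fun i => map (fun k => (i, k)) (iota 0 (nn i))) (iota 0 m).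
  have [reps Hreps] := reps_ex Ol (fun w r => A pi w0 (FGinv r) = w).
  exists reps => f.
  pose w := A pi w0 (FGinv f).
  have Dw : D w by exact: A_D.
  have [r hr Hr] : exists2 r, List.In r reps & A pi w0 (FGinv r) = w.
    apply: Hreps; last by exists f.
    case: Dw => h1 h2; apply/List.in_flat_map; exists w.1; split; first exact: In_iota.
    have e : w = (w.1, w.2) := surjective_pairing w.
    rewrite {1}e; apply: List.in_map; exact: In_iota.
  exists r => // h.
  set g := FGmul (FGinv r) f.
  have Hg : A pi w0 g = w0.
    rewrite /g (A_mul Dpi canc) // Hr /w; exact: (A_inv2 Dpi canc).
  have Hg' : A pi w0 (FGinv g) = w0.
    have := A_inv1 Dpi canc g Dw0; by rewrite Hg.
  by rewrite /Defs.shift /x (A_mul Dpi canc) // Hg'.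
- by rewrite /x /=.
Qed.
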